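(* Let $\mathcal{H}_A,\mathcal{H}_B$ be finite-dimensional Hilbert spaces and let $\rho_{AB}$ be a density operator on $\mathcal{H}_A\otimes\mathcal{H}_B$. Let $\lambda_1,\dots,\lambda_R>0$ be the operator Schmidt coefficients of $\rho_{AB}$, i.e. $\rho_{AB}/\sqrt{\mathrm{Tr}(\rho_{AB}^2)}=\sum_{i=1}^R\lambda_i\,O_{A,i}\otimes O_{B,i}$ with $\{O_{A,i}\}$ and $\{O_{B,i}\}$ orthonormal families with respect to the Hilbert–Schmidt inner product (so $\sum_i\lambda_i^2=1$). Define the Rényi 2-operator entanglement $S^{(2)}(\rho_{AB})=-\log\big(\sum_{i=1}^R\lambda_i^4\big)$ and the Rényi 2-entropy $R^{(2)}(\rho_{AB})=-\log\big(\mathrm{Tr}(\rho_{AB}^2)\big)$. If $$S^{(2)}(\rho_{AB})>R^{(2)}(\rho_{AB}),$$ then $\rho_{AB}$ is entangled across the bipartition $A$ versus $B$, i.e. it cannot be written as a convex combination $\sum_k\alpha_k\rho_A^{(k)}\otimes\rho_B^{(k)}$ with $\alpha_k\ge0$ and $\rho_A^{(k)},\rho_B^{(k)}$ density operators on $\mathcal{H}_A,\mathcal{H}_B$.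
   Context: The operator Schmidt decomposition of an operator is its Schmidt decomposition as a vector in $\mathrm{End}(\mathcal{H}_A)\otimes\mathrm{End}(\mathcal{H}_B)$ equipped with the Hilbert–Schmidt inner product $\langle X,Y\rangle=\mathrm{Tr}(X^\dagger Y)$; the Schmidt coefficients are unique. *)

(* Defs.v *)
From HB Require Import structures.
From mathcomp Require Import all_boot all_order all_algebra.
From mathcomp Require Import complex mxtens.
From mathcomp Require Import reals exp.
Set Implicit Arguments. Unset Strict Implicit. Unset Printing Implicit Defensive.
Import Order.TTheory GRing.Theory Num.Theory.
Local Open Scope ring_scope.

Section QDefs.
Variable R : realType.
Local Notation C := (R[i]).

Definition adjmx (p q : nat) (A : 'M[C]_(p, q)) : 'M[C]_(q, p) :=
  (map_mx Num.conj A)^T.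

Definition hs_inner (p : nat) (X Y : 'M[C]_p) : C := \tr (adjmx X *m Y).

Definition is_density (p : nat) (rho : 'M[C]_p) : Prop :=
  [/\ adjmx rho = rho,
      (forall v : 'cV[C]_p, 0 <= (adjmx v *m rho *m v) 0 0)
    & \tr rho = 1].

(* Tr(rho^2), as a real number (rho Hermitian) *)
Definition purity (p : nat) (rho : 'M[C]_p) : R := complex.Re (\tr (rho *m rho)).

Definition separable (m n : nat) (rho : 'M[C]_(m * n)) : Prop :=
  exists (K : nat) (alpha : 'I_K -> R) (rA : 'I_K -> 'M[C]_m) (rB : 'I_K -> 'M[C]_n),
    [/\ forall k, 0 <= alpha k,
        \sum_(k < K) alpha k = 1,
        forall k, is_density (rA k),
        forall k, is_density (rB k)
      & rho = \sum_(k < K) ((alpha k)%:C)%C *: (rA k *t rB k)].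

Definition op_schmidt_decomp (m n r : nat) (rho : 'M[C]_(m * n))
    (lam : 'I_r -> R) (OA : 'I_r -> 'M[C]_m) (OB : 'I_r -> 'M[C]_n) : Prop :=
  [/\ forall i, 0 < lam i,
      forall i j, hs_inner (OA i) (OA j) = (i == j)%:R,
      forall i j, hs_inner (OB i) (OB j) = (i == j)%:R
    & (((Num.sqrt (purity rho))^-1)%:C)%C *: rho
        = \sum_(i < r) ((lam i)%:C)%C *: (OA i *t OB i)].

Definition renyi2_op_ent (r : nat) (lam : 'I_r -> R) : R :=
  - ln (\sum_(i < r) lam i ^+ 4).
Definition renyi2_entropy (p : nat) (rho : 'M[C]_p) : R := - ln (purity rho).

End QDefs.

(* Main.v *)
Require Import Defs.
From HB Require Import structures.
From mathcomp Require Import all_boot all_order all_algebra.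
From mathcomp Require Import complex mxtens.
From mathcomp Require Import reals exp.
From mathcomp Require Import ring lra.
Import Order.TTheory GRing.Theory Num.Theory.
Set Implicit Arguments. Unset Strict Implicit.
Local Open Scope ring_scope.

Section S.
Variable R : realType.
Local Notation C := R[i].
Local Notation hs := (@hs_inner R _).

Lemma hsE p (X Y : 'M[C]_p) :
  hs X Y = \sum_i \sum_k (X k i)^* * Y k i.
Proof.
rewrite /hs_inner /mxtrace; apply: eq_bigr => i _; rewrite !mxE.
by apply: eq_bigr => k _; rewrite !mxE.
Qed.

Lemma hs_conj p (X Y : 'M[C]_p) : hs Y X = (hs X Y)^*.
Proof.
rewrite !hsE rmorph_sum; apply: eq_bigr => i _; rewrite rmorph_sum.
by apply: eq_bigr => k _; rewrite rmorphM /= conjCK mulrC.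
Qed.

Lemma hsDr p (X Y Z : 'M[C]_p) : hs X (Y + Z) = hs X Y + hs X Z.
Proof. by rewrite /hs_inner mulmxDr raddfD. Qed.
Lemma hsBr p (X Y Z : 'M[C]_p) : hs X (Y - Z) = hs X Y - hs X Z.
Proof. by rewrite /hs_inner mulmxBr raddfB. Qed.
Lemma hsZr p (X Y : 'M[C]_p) a : hs X (a *: Y) = a * hs X Y.
Proof. by rewrite /hs_inner -scalemxAr mxtraceZ. Qed.
Lemma hs_sumr p r (X : 'M[C]_p) (F : 'I_r -> 'M[C]_p) :
  hs X (\sum_j F j) = \sum_j hs X (F j).
Proof. by rewrite /hs_inner mulmx_sumr raddf_sum. Qed.

Lemma hsDl p (X Y Z : 'M[C]_p) : hs (Y + Z) X = hs Y X + hs Z X.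
Proof. by rewrite hs_conj hsDr rmorphD /= -!hs_conj. Qed.
Lemma hsBl p (X Y Z : 'M[C]_p) : hs (Y - Z) X = hs Y X - hs Z X.
Proof. by rewrite hs_conj hsBr rmorphB /= -!hs_conj. Qed.
Lemma hsZl p (X Y : 'M[C]_p) a : hs (a *: Y) X = a^* * hs Y X.
Proof. by rewrite hs_conj hsZr rmorphM /= -!hs_conj. Qed.
Lemma hs_suml p r (X : 'M[C]_p) (F : 'I_r -> 'M[C]_p) :
  hs (\sum_j F j) X = \sum_j hs (F j) X.
Proof.
rewrite hs_conj hs_sumr rmorph_sum; apply: eq_bigr => j _.
by rewrite /= -hs_conj.
Qed.

Lemma hs_normE p (X : 'M[C]_p) : hs X X = \sum_i \sum_k `|X k i| ^+ 2.
Proof.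
rewrite hsE; apply: eq_bigr => i _; apply: eq_bigr => k _.
by rewrite normCKC.
Qed.

Lemma hs_ge0 p (X : 'M[C]_p) : 0 <= hs X X.
Proof.
rewrite hs_normE; apply: sumr_ge0 => i _; apply: sumr_ge0 => k _.
by rewrite exprn_ge0.
Qed.

Lemma adjmx_tens m n (A : 'M[C]_m) (B : 'M[C]_n) :
  adjmx (A *t B) = adjmx A *t adjmx B.
Proof. by apply/matrixP => i j; rewrite !mxE rmorphM. Qed.

Lemma tr_tens m n (A : 'M[C]_m) (B : 'M[C]_n) : \tr (A *t B) = \tr A * \tr B.
Proof.
rewrite /mxtrace mulr_sum; apply: eq_bigr => i _; by rewrite !mxE.
Qed.

Lemma hs_tens m n (A C' : 'M[C]_m) (B D : 'M[C]_n) :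
  hs (A *t B) (C' *t D) = hs A C' * hs B D.
Proof. by rewrite /hs_inner adjmx_tens tensmx_mul tr_tens. Qed.


Section Ortho.
Variables (p r : nat) (T : 'I_r -> 'M[C]_p).
Hypothesis ortho : forall i j, hs (T i) (T j) = (i == j)%:R.

Lemma ortho_coef (a : 'I_r -> C) i : hs (T i) (\sum_j a j *: T j) = a i.
Proof.
rewrite hs_sumr (bigD1 i) //= hsZr ortho eqxx mulr1 big1 ?addr0 //.
by move=> j /negbTE ji; rewrite hsZr ortho eq_sym ji mulr0.
Qed.

Lemma ortho_norm (a : 'I_r -> C) :
  hs (\sum_j a j *: T j) (\sum_j a j *: T j) = \sum_j (a j)^* * a j.
Proof. by rewrite hs_suml; apply: eq_bigr => j _; rewrite hsZl ortho_coef. Qed.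

Lemma bessel (X : 'M[C]_p) :
  \sum_i (hs (T i) X)^* * hs (T i) X <= hs X X.
Proof.
set a := fun i => hs (T i) X; set S := \sum_j a j *: T j.
have := hs_ge0 (X - S); rewrite hsBl !hsBr.
have -> : hs S S = \sum_i (a i)^* * a i by rewrite ortho_norm.
have -> : hs S X = \sum_i (a i)^* * a i.
  by rewrite hs_suml; apply: eq_bigr => j _; rewrite hsZl.
have -> : hs X S = \sum_i (a i)^* * a i.
  rewrite hs_sumr; apply: eq_bigr => j _; rewrite hsZr hs_conj mulrC.
  by [].
by rewrite subrr subr0 subr_ge0.
Qed.
End Ortho.

Lemma adjmxD p q (A B : 'M[C]_(p, q)) : adjmx (A + B) = adjmx A + adjmx B.
Proof. by apply/matrixP => i j; rewrite !mxE rmorphD. Qed.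
Lemma adjmxZ p q (A : 'M[C]_(p, q)) a : adjmx (a *: A) = a^* *: adjmx A.
Proof. by apply/matrixP => i j; rewrite !mxE rmorphM. Qed.
Lemma adjmx_delta p q (i : 'I_p) (j : 'I_q) :
  adjmx (delta_mx i j : 'M[C]_(p, q)) = delta_mx j i.
Proof. by apply/matrixP => a b; rewrite !mxE rmorph_nat andbC. Qed.

Lemma delta_entry p (M : 'M[C]_p) a b :
  ((delta_mx (0 : 'I_1) a : 'rV[C]_p) *m M *m (delta_mx b (0 : 'I_1) : 'cV[C]_p)) 0 0 = M a b.
Proof. by rewrite -rowE -colE !mxE. Qed.

Lemma delta_mul p (M : 'M[C]_p) a b :
  ((delta_mx (0 : 'I_1) a : 'rV[C]_p) *m M *m (delta_mx b (0 : 'I_1) : 'cV[C]_p)) = (M a b)%:M.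
Proof.
by apply/matrixP => u v; rewrite [u]ord1 [v]ord1 delta_entry mxE mulr1n.
Qed.

Lemma qform p (M : 'M[C]_p) i k (x y : C) :
  let v : 'cV[C]_p := x *: delta_mx i 0 + y *: delta_mx k 0 in
  (adjmx v *m M *m v) 0 0
  = x^* * x * M i i + x^* * y * M i k + y^* * x * M k i + y^* * y * M k k.
Proof.
rewrite /= adjmxD !adjmxZ !adjmx_delta.
rewrite !mulmxDl !mulmxDr -!scalemxAl -!scalemxAr !delta_mul !mxE /= !mulr1n.
ring.
Qed.


Lemma dens_herm p (rho : 'M[C]_p) : is_density rho -> forall i k, rho k i = (rho i k)^*.
Proof.
case=> H _ _ i k; by rewrite -{1}H mxE mxE.
Qed.

Lemma dens_q p (rho : 'M[C]_p) : is_density rho -> forall i k (x y : C),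
  0 <= x^* * x * rho i i + x^* * y * rho i k + y^* * x * rho k i + y^* * y * rho k k.
Proof. by case=> _ H _ i k x y; rewrite -qform; apply: H. Qed.

Lemma dens_diag p (rho : 'M[C]_p) : is_density rho -> forall i, 0 <= rho i i.
Proof.
move=> D i; have := dens_q D i i 1 0.
by rewrite !rmorph0 !rmorph1 !(mul0r, mulr0, mul1r, addr0).
Qed.

Lemma dens_cross p (rho : 'M[C]_p) : is_density rho -> forall i k,
  (rho i k)^* * rho i k <= rho i i * rho k k.
Proof.
move=> D i k.
have di0 := dens_diag D i; have dk0 := dens_diag D k.
have cdi : (rho i i)^* = rho i i by apply: conj_Creal; apply: ger0_real.
have cdk : (rho k k)^* = rho k k by apply: conj_Creal; apply: ger0_real.
have hki := dens_herm D i k.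
set z := rho i k in hki *; set di := rho i i in di0 cdi *; set dk := rho k k in dk0 cdk *.
move: dk0; rewrite le_eqVlt => /predU1P [dk_0|dk_gt0]; last first.
  have := dens_q D i k dk (- z^*).
  rewrite hki -/z -/di -/dk rmorphN /= conjCK cdk.
  have -> : dk * dk * di + dk * - z^* * z + - z * dk * z^* + - z * - z^* * dk
     = dk * (di * dk - z^* * z) by ring.
  by rewrite pmulr_rge0 // subr_ge0.
have := dens_q D i k (- z) (di + 1).
rewrite hki -/z -/di -/dk rmorphN rmorphD /= rmorph1 cdi -dk_0.
have -> : (- z^* * - z * di + - z^* * (di + 1) * z + (di + 1) * - z * z^* + (di + 1) * (di + 1) * 0)
   = (di + 2) * - (z^* * z) by ring.
rewrite pmulr_rge0 ?oppr_ge0 ?mulr0 //.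
by apply: (lt_le_trans (ltr0Sn _ 1)); rewrite lerDr.
Qed.

Lemma dens_purity_le1 p (rho : 'M[C]_p) : is_density rho -> hs rho rho <= 1.
Proof.
move=> D; have [_ _ tr1] := D.
have -> : 1 = \sum_i \sum_k rho k k * rho i i.
  transitivity (\tr rho * \tr rho); first by rewrite tr1 mulr1.
  rewrite {1}/mxtrace mulr_suml; apply: eq_bigr => i _.
  by rewrite mulrC /mxtrace mulr_suml.
rewrite hsE; apply: ler_sum => i _; apply: ler_sum => k _.
by rewrite dens_cross.
Qed.


Lemma bound_ab m n r (rA : 'M[C]_m) (rB : 'M[C]_n)
  (OA : 'I_r -> 'M[C]_m) (OB : 'I_r -> 'M[C]_n) :
  is_density rA -> is_density rB ->
  (forall i j, hs (OA i) (OA j) = (i == j)%:R) ->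
  (forall i j, hs (OB i) (OB j) = (i == j)%:R) ->
  `|\sum_i hs (OA i) rA * hs (OB i) rB| <= 1.
Proof.
move=> DA DB oA oB.
apply: le_trans (ler_norm_sum _ _ _) _.
have h1 : \sum_i `|hs (OA i) rA * hs (OB i) rB| *+ 2
   <= \sum_i (`|hs (OA i) rA| ^+ 2 + `|hs (OB i) rB| ^+ 2).
  apply: ler_sum => i _; rewrite normrM.
  exact: (real_leif_mean_square_scaled (normr_real _) (normr_real _)).1.
have h2 : \sum_i (`|hs (OA i) rA| ^+ 2 + `|hs (OB i) rB| ^+ 2) <= 1 *+ 2.
  rewrite big_split /= mulr2n; apply: lerD.
    apply: le_trans (dens_purity_le1 DA).
    under eq_bigr do rewrite normCKC; exact: bessel.
  apply: le_trans (dens_purity_le1 DB).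
  under eq_bigr do rewrite normCKC; exact: bessel.
have := le_trans h1 h2; rewrite sumrMnl lerMn2r /=.
done.
Qed.

End S.

Lemma conjR (R : realType) (x : R) : (x%:C%C)^* = x%:C%C :> R[i].
Proof. by apply: conj_Creal; apply/complex_realP; exists x. Qed.

Unset Implicit Arguments.
Set Strict Implicit.

Theorem proposition1 (R : realType) (m n : nat) (rho : 'M[R[i]]_(m * n))
    (r : nat) (lam : 'I_r -> R) (OA : 'I_r -> 'M[R[i]]_m) (OB : 'I_r -> 'M[R[i]]_n) :
  is_density rho ->
  op_schmidt_decomp rho lam OA OB ->
  renyi2_entropy rho < renyi2_op_ent lam ->
  ~ separable rho.
Proof.
move=> D [lam_gt0 oA oB dec] hren [K [alpha [rA [rB [a_ge0 a_sum DA DB rhoE]]]]].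
set P := purity rho in dec hren.
have hsrr : hs_inner rho rho = P%:C%C.
  have [H _ _] := D.
  have E : hs_inner rho rho = \tr (rho *m rho) by rewrite /hs_inner H.
  rewrite /P /purity E RRe_real //; apply: ger0_real; rewrite -E; exact: hs_ge0.
have P_gt0 : 0 < P.
  have P_ge0 : 0 <= P by rewrite -ler0c -hsrr hs_ge0.
  rewrite lt_def P_ge0 andbT; apply/negP => /eqP P0.
  have : hs_inner rho rho == 0 by rewrite hsrr P0.
  rewrite hs_normE psumr_eq0; last first.
    by move=> i _; apply: sumr_ge0 => k _; exact: exprn_ge0.
  move/allP => H.
  have [_ _ tr1] := D.
  have : \tr rho = 0.
    rewrite /mxtrace big1 // => i _.
    have := H i (mem_index_enum i); rewrite /= psumr_eq0; last first.
      by move=> k _; exact: exprn_ge0.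
    move/allP/(_ i (mem_index_enum i)); rewrite /= expf_eq0 /= normr_eq0.
    by move/eqP.
  by rewrite tr1 => /eqP; rewrite oner_eq0.
set s := Num.sqrt P in dec.
have s_gt0 : 0 < s by rewrite sqrtr_gt0.
have s2 : s ^+ 2 = P by rewrite sqr_sqrtr // ltW.
pose T i := OA i *t OB i.
have oT : forall i j, hs_inner (T i) (T j) = (i == j)%:R.
  by move=> i j; rewrite hs_tens oA oB; case: eqP; rewrite ?mulr1 ?mulr0.
have rho2 : rho = (s%:C%C) *: \sum_i ((lam i)%:C%C) *: T i.
  rewrite -dec scalerA -rmorphM /= mulfV ?gt_eqF // rmorph1 scale1r //.
have cT : forall i, hs_inner (T i) rho = (s * lam i)%:C%C.
  by move=> i; rewrite {1}rho2 hsZr (ortho_coef oT) rmorphM.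
have pars : \sum_i lam i ^+ 2 = 1.
  have := ortho_norm oT (fun i => (lam i)%:C%C).
  rewrite -dec hsZl hsZr hsrr conjR -!rmorphM.
  under [X in _ = X]eq_bigr do rewrite conjR -rmorphM.
  rewrite -rmorph_sum => /complexI <-.
  rewrite -s2; field; exact: lt0r_neq0.
set L := \sum_i lam i.
have L_ge0 : 0 <= L by apply: sumr_ge0 => i _; exact: ltW.
have sumc : \sum_i hs_inner (T i) rho = (s * L)%:C%C.
  by rewrite mulr_sumr rmorph_sum; apply: eq_bigr => i _; rewrite cT.
have sumc2 : \sum_i hs_inner (T i) rho = \sum_k (alpha k)%:C%C *
      \sum_i hs_inner (OA i) (rA k) * hs_inner (OB i) (rB k).
  rewrite rhoE; under eq_bigr do rewrite hs_sumr.
  rewrite exchange_big; apply: eq_bigr => k _; rewrite mulr_sumr.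
  by apply: eq_bigr => i _; rewrite hsZr hs_tens.
have sL1 : s * L <= 1.
  have : `|(s * L)%:C%C| <= 1.
    rewrite -sumc sumc2; apply: le_trans (ler_norm_sum _ _ _) _.
    apply: (@le_trans _ _ (\sum_k (alpha k)%:C%C)).
      apply: ler_sum => k _; rewrite normrM ger0_norm ?ler0c //.
      by apply: ler_piMr; [rewrite ler0c | exact: bound_ab].
    by rewrite -rmorph_sum a_sum rmorph1.
  rewrite ger0_norm; last by rewrite ler0c mulr_ge0 // ltW.
  by rewrite -lecR rmorph1.
have S4ge : P <= \sum_i lam i ^+ 4.
  have key : forall i, 3 * s ^+ 2 * lam i ^+ 2 - 2 * s ^+ 3 * lam i <= lam i ^+ 4.
    move=> i; rewrite -subr_ge0.
    have -> : lam i ^+ 4 - (3 * s ^+ 2 * lam i ^+ 2 - 2 * s ^+ 3 * lam i)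
      = lam i * (lam i - s) ^+ 2 * (lam i + 2 * s) by ring.
    have li := lam_gt0 i.
    apply: mulr_ge0; first by apply: mulr_ge0; [exact: ltW | exact: sqr_ge0].
    lra.
  apply: le_trans (ler_sum _ (fun i _ => key i)).
  rewrite sumrB -!mulr_sumr pars -/L -s2.
  have h : 0 <= s ^+ 2 * (1 - s * L) by apply: mulr_ge0; [exact: sqr_ge0 | lra].
  nra.
have S4_gt0 : 0 < \sum_i lam i ^+ 4 by apply: lt_le_trans S4ge.
move: hren; rewrite /renyi2_entropy /renyi2_op_ent ltrN2 -/P.
by rewrite ltNge ler_ln ?posrE // S4ge.
Qed.
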